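(* Let $T_1$ and $T_2$ be two $L_1$-periodic tilings of type $(\gamma_1,\gamma_2,\gamma_3)$ with $\gamma_1,\gamma_2,\gamma_3>0$. Then $T_1$ and $T_2$ are connected by a sequence of flips.
   Context: Let $u^\top=(1,0)$, $v^\top=-(\tfrac12,\tfrac{\sqrt3}{2})$, $w=-(u+v)$, $L_0=\langle u,v\rangle$, and $L_1\le L_0$ a full-rank sublattice. An $L_1$-periodic tiling (periodic lozenge tiling of the plane) is an $L_1$-invariant map $T\colon L_0\to\{U,V,W\}$ such that for every $x$ exactly one of $T(x)=W$, $T(x+u)=V$, $T(x-v)=U$ holds; $T(x)$ removes one arrow of the upward triangle $x\to x+u\to x-v\to x$ ($U$: $x\to x+u$; $V$: $x-v\to x$; $W$: $x+u\to x-v$), and the remaining arrows are said to be in $T$. The type of $T$ counts the values $U,V,W$ over $L_0/L_1$. A source (resp. sink) of $T$ is a point where no arrow in $T$ ends (resp. starts), i.e. three lozenges of three different types meet there. A flip at a source or sink $z$ replaces the three lozenges meeting at each point of $z+L_1$ by the opposite configuration (turning sources into sinks and vice versa); it preserves the type. *)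

(* Defs.v *)
(* Points of L0 = <u,v> are encoded by integer coordinates:
   (a,b) : int * int  stands for  a*u + b*v, so u = (1,0), v = (0,1),
   w = -(u+v) = (-1,-1). *)
From HB Require Import structures.
From mathcomp Require Import all_boot all_order all_algebra.
Set Implicit Arguments. Unset Strict Implicit. Unset Printing Implicit Defensive.
Import Order.TTheory GRing.Theory Num.Theory.
Local Open Scope ring_scope.

Inductive tile := U | V | W.

Definition pt := (int * int)%type.
Definition padd (x y : pt) : pt := (x.1 + y.1, x.2 + y.2).
Definition psub (x y : pt) : pt := (x.1 - y.1, x.2 - y.2).
Definition pu : pt := (1, 0).
Definition pv : pt := (0, 1).

Definition full_rank (p q : pt) : bool := p.1 * q.2 - p.2 * q.1 != 0.
Definition inL1 (p q : pt) (x : pt) : Prop :=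
  exists m n : int, x = (m * p.1 + n * q.1, m * p.2 + n * q.2).
Definition congL1 (p q : pt) (x y : pt) : Prop := inL1 p q (psub x y).

Definition exactly_one (A B C : Prop) : Prop :=
  (A /\ ~ B /\ ~ C) \/ (~ A /\ B /\ ~ C) \/ (~ A /\ ~ B /\ C).

Definition is_tiling (p q : pt) (T : pt -> tile) : Prop :=
  (forall x l, inL1 p q l -> T (padd x l) = T x) /\
  (forall x, exactly_one (T x = W) (T (padd x pu) = V) (T (psub x pv) = U)).

Definition isU (t : tile) : bool := if t is U then true else false.
Definition isV (t : tile) : bool := if t is V then true else false.
Definition isW (t : tile) : bool := if t is W then true else false.

Definition has_type (p q : pt) (T : pt -> tile) (g1 g2 g3 : nat) : Prop :=
  exists s : seq pt,
    (forall x, exists2 y, y \in s & congL1 p q x y) /\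
    (forall i j, (i < j < size s)%N ->
        ~ congL1 p q (nth (0,0) s i) (nth (0,0) s j)) /\
    count (fun y => isU (T y)) s = g1 /\
    count (fun y => isV (T y)) s = g2 /\
    count (fun y => isW (T y)) s = g3.

(* Arrows of the up triangle at x: x -> x+u (removed iff T x = U),
   x+u -> x-v (removed iff T x = W), x-v -> x (removed iff T x = V).
   No arrow in T ends at z   iff T(z-u)=U, T(z+v)=W, T(z)=V.
   No arrow in T starts at z iff T(z)=U, T(z-u)=W, T(z+v)=V. *)
Definition is_source (T : pt -> tile) (z : pt) : Prop :=
  T (psub z pu) = U /\ T (padd z pv) = W /\ T z = V.
Definition is_sink (T : pt -> tile) (z : pt) : Prop :=
  T z = U /\ T (psub z pu) = W /\ T (padd z pv) = V.

(* T' is obtained from T by the flip at z (applied at every point of z+L1):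
   the three up-triangles containing each point of z+L1 (those at z, z-u, z+v)
   get the opposite configuration, everything else is unchanged. *)
Definition flip_step (p q : pt) (T T' : pt -> tile) : Prop :=
  exists z,
    (forall x, ~ congL1 p q x z -> ~ congL1 p q x (psub z pu) ->
               ~ congL1 p q x (padd z pv) -> T' x = T x) /\
    ((is_source T z /\
      forall x, (congL1 p q x z -> T' x = U) /\
                (congL1 p q x (psub z pu) -> T' x = W) /\
                (congL1 p q x (padd z pv) -> T' x = V)) \/
     (is_sink T z /\
      forall x, (congL1 p q x z -> T' x = V) /\
                (congL1 p q x (psub z pu) -> T' x = U) /\
                (congL1 p q x (padd z pv) -> T' x = W))).

Inductive flip_connected (p q : pt) : (pt -> tile) -> (pt -> tile) -> Prop :=
  | fc_refl T : flip_connected p q T T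
  | fc_step T T' T'' : flip_step p q T T' -> flip_connected p q T' T'' ->
                       flip_connected p q T T''.

(* Main.v *)
Require Import Defs.
From mathcomp Require Import all_boot all_order all_algebra zify ring.
From Stdlib Require Import ClassicalEpsilon FunctionalExtensionality.
Set Implicit Arguments. Unset Strict Implicit. Unset Printing Implicit Defensive.
Import Order.TTheory GRing.Theory Num.Theory.
Local Open Scope ring_scope.

Ltac ptx := repeat match goal with x : pt |- _ => let a := fresh "a" in let b := fresh "b" in destruct x as [a b] end;
  rewrite /psub /padd /pu /pv /=; try (congr pair; lia).

Lemma inL1_0 p q : inL1 p q (0,0).
Proof. exists 0, 0; congr pair; lia. Qed.

Lemma inL1_add p q x y : inL1 p q x -> inL1 p q y -> inL1 p q (padd x y).
Proof.
case=> m [n ->]; case=> m' [n' ->]; exists (m+m'), (n+n'); rewrite /padd /=.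
congr pair; ring.
Qed.

Lemma inL1_opp p q x : inL1 p q x -> inL1 p q (psub (0,0) x).
Proof.
case=> m [n ->]; exists (-m), (-n); rewrite /psub /=; congr pair; ring.
Qed.

Lemma cong_refl p q x : congL1 p q x x.
Proof. rewrite /congL1; have -> : psub x x = (0,0) by ptx. exact: inL1_0. Qed.

Lemma cong_sym p q x y : congL1 p q x y -> congL1 p q y x.
Proof.
rewrite /congL1 => /inL1_opp; congr inL1; ptx.
Qed.

Lemma cong_trans p q x y z : congL1 p q x y -> congL1 p q y z -> congL1 p q x z.
Proof.
rewrite /congL1 => H1 H2; have := inL1_add H1 H2; congr inL1; ptx.
Qed.

Lemma cong_add p q x y k : congL1 p q x y -> congL1 p q (padd x k) (padd y k).
Proof. rewrite /congL1; congr inL1; ptx. Qed.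

Lemma cong_addE p q x y k : congL1 p q (padd x k) (padd y k) <-> congL1 p q x y.
Proof.
split; last exact: cong_add.
move/(cong_add (psub (0,0) k)); congr congL1; ptx.
Qed.

Lemma cong_shift p q x l : inL1 p q l -> congL1 p q (padd x l) x.
Proof. rewrite /congL1; congr inL1; ptx. Qed.

Lemma tiling_per p q T : is_tiling p q T -> forall x y, congL1 p q x y -> T x = T y.
Proof.
case=> H _ x y C; have := H y _ C; congr (_ = _); congr T; ptx.
Qed.

Lemma int_ind1 (Q : int -> Prop) : Q 0 -> (forall n, Q n <-> Q (n + 1)) -> forall n, Q n.
Proof.
move=> Q0 HS.
have Hp : forall k : nat, Q (Posz k).
  elim=> // k IH; have := (HS k); have -> : Posz k + 1 = Posz k.+1 by lia. tauto.
have Hn : forall k : nat, Q (Negz k).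
  elim=> [|k IH].
    have := HS (Negz 0); have -> : Negz 0 + 1 = 0 by lia. tauto.
  have := HS (Negz k.+1); have -> : Negz k.+1 + 1 = Negz k by lia. tauto.
by case.
Qed.

Lemma pt_ind (P : pt -> Prop) : P (0,0) ->
  (forall y, P y <-> P (padd y pu)) -> (forall y, P y <-> P (padd y pv)) -> forall y, P y.
Proof.
move=> P0 Hu Hv [a b].
have Ha : forall a, P (a, 0).
  apply: int_ind1 => // n; have := Hu (n, 0); congr (_ <-> P _); ptx.
move: b; apply: int_ind1 => // n; have := Hv (a, n); congr (_ <-> P _); ptx.
Qed.

Lemma pt_const (f : pt -> int) : (forall y, f (padd y pu) = f y) -> (forall y, f (padd y pv) = f y) ->
  forall y, f y = f (0,0).
Proof.
move=> Hu Hv; apply: pt_ind => // y; [rewrite Hu | rewrite Hv]; by [].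
Qed.
Definition wt (b : bool) : int := if b then -2 else 1.
Definition wu (T : pt -> tile) y := wt (isU (T y)).
Definition wv (T : pt -> tile) y := wt (isV (T (padd y pv))).
Definition ww (T : pt -> tile) y := wt (isW (T (psub y pu))).
Definition is_height (T : pt -> tile) (h : pt -> int) :=
  forall y, h (padd y pu) - h y = wu T y /\ h (padd y pv) - h y = wv T y.

Lemma exactly_one_iff (t1 t2 t3 : tile) :
  exactly_one (t1 = W) (t2 = V) (t3 = U) <-> wt (isW t1) + wt (isV t2) + wt (isU t3) = 0.
Proof.
rewrite /exactly_one; case: t1; case: t2; case: t3 => /=; split => //;
  try (intuition discriminate); try lia.
Qed.

Lemma up_tri T z : wu T z + ww T (padd z pu) + wv T (psub z pv) = 0.
Proof.
rewrite /wu /ww /wv.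
have -> : psub (padd z pu) pu = z by ptx.
have -> : padd (psub z pv) pv = z by ptx.
by case: (T z).
Qed.

Lemma down_tri p q T x : is_tiling p q T ->
  wt (isW (T x)) + wt (isV (T (padd x pu))) + wt (isU (T (psub x pv))) = 0.
Proof. by case=> _ /(_ x) /exactly_one_iff. Qed.

Lemma square p q T y : is_tiling p q T ->
  wu T y + wv T (padd y pu) = wv T y + wu T (padd y pv).
Proof.
move=> HT; have H1 := up_tri T (padd y pv); have H2 := down_tri (padd y pv) HT.
move: H1 H2; rewrite /wu /wv /ww.
have -> : psub (padd (padd y pv) pu) pu = padd y pv by ptx.
have -> : padd (padd y pu) pv = padd (padd y pv) pu by ptx.
have -> : psub (padd y pv) pv = y by ptx.
lia.
Qed.

Definition ssum (f : int -> int) (n : int) : int :=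
  match n with Posz k => \sum_(i < k) f (Posz i) | Negz k => - \sum_(i < k.+1) f (Negz i) end.

Lemma ssum0 f : ssum f 0 = 0.
Proof. exact: big_ord0. Qed.

Lemma ssumS f n : ssum f (n + 1) = ssum f n + f n.
Proof.
case: n => [k|[|k]].
- have -> : Posz k + 1 = Posz k.+1 by lia.
  by rewrite /ssum big_ord_recr.
- have -> : Negz 0 + 1 = 0 by lia.
  rewrite ssum0 /ssum big_ord_recr big_ord0 /=; lia.
- have -> : Negz k.+1 + 1 = Negz k by lia.
  rewrite /ssum [in RHS]big_ord_recr /=; ring.
Qed.

Lemma height_exists p q T : is_tiling p q T -> exists h, is_height T h.
Proof.
move=> HT.
pose h (x : pt) := ssum (fun i => wu T (i,0)) x.1 + ssum (fun j => wv T (x.1,j)) x.2.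
exists h => -[a b]; split; last first.
  have -> : padd (a,b) pv = (a, b+1) by ptx.
  rewrite /h /= ssumS; lia.
have -> : padd (a,b) pu = (a+1, b) by ptx.
move: b; apply: int_ind1.
  rewrite /h /= !big_ord0 ssumS; lia.
move=> n; have := square (a,n) HT.
have -> : padd (a,n) pu = (a+1, n) by ptx.
have -> : padd (a,n) pv = (a, n+1) by ptx.
rewrite /h /= !ssumS; lia.
Qed.

Lemma height_cond T h : is_height T h ->
  forall x, exactly_one (T x = W) (T (padd x pu) = V) (T (psub x pv) = U).
Proof.
move=> H x; apply/exactly_one_iff.
have U1 := up_tri T x; rewrite /ww in U1.
have E1 : psub (padd x pu) pu = x by ptx.
have E2 : padd (psub x pv) pv = x by ptx.
have E3 : padd (padd (psub x pv) pu) pv = padd x pu by ptx.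
rewrite E1 in U1.
have [H1 _] := H x; have [_ H2] := H (psub x pv); have [H3 _] := H (psub x pv).
have [_ H4] := H (padd (psub x pv) pu).
rewrite E2 in H2; rewrite /wu in H3; rewrite /wv E3 in H4.
rewrite /wv E2 in U1 H2.
lia.
Qed.
Definition repsys p q (s : seq pt) :=
  (forall x, exists2 y, y \in s & congL1 p q x y) /\
  (forall i j, (i < j < size s)%N -> ~ congL1 p q (nth (0,0) s i) (nth (0,0) s j)).

Lemma nth_cong_eq p q s i j : repsys p q s -> (i < size s)%N -> (j < size s)%N ->
  congL1 p q (nth (0,0) s i) (nth (0,0) s j) -> i = j.
Proof.
case=> _ Hn Hi Hj C; case: (ltngtP i j) => // H.
- by have := Hn i j; rewrite H Hj => /(_ isT).
- by have := Hn j i; rewrite H Hi => /(_ isT); move/(_ (cong_sym C)).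
Qed.

Lemma rep_inj p q s y y' : repsys p q s -> y \in s -> y' \in s -> congL1 p q y y' -> y = y'.
Proof.
move=> R Hy Hy' C.
rewrite -(nth_index (0,0) Hy) -(nth_index (0,0) Hy') in C *.
by rewrite (nth_cong_eq R _ _ C) ?index_mem.
Qed.

Lemma rep_uniq p q s : repsys p q s -> uniq s.
Proof.
move=> R; apply/(uniqP (0,0)) => i j Hi Hj E.
by apply: (nth_cong_eq R Hi Hj); rewrite E; apply: cong_refl.
Qed.

Lemma rep_fun p q s : repsys p q s -> forall x, {y | y \in s /\ congL1 p q x y}.
Proof.
case=> Hc _ x; apply: constructive_indefinite_description.
by case: (Hc x) => y H1 H2; exists y.
Qed.

Lemma shift_sum p q s (f : pt -> int) k : repsys p q s ->
  (forall x y, congL1 p q x y -> f x = f y) ->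
  \sum_(y <- s) f (padd y k) = \sum_(y <- s) f y.
Proof.
move=> R Hf.
pose sg y := proj1_sig (rep_fun R (padd y k)).
have sgP y : sg y \in s /\ congL1 p q (padd y k) (sg y) by rewrite /sg; case: (rep_fun _ _).
transitivity (\sum_(y <- s) f (sg y)).
  by apply: eq_bigr => y _; apply: Hf; case: (sgP y).
rewrite -(big_map sg xpredT f); apply: perm_big.
have U := rep_uniq R.
have Um : uniq [seq sg i | i <- s].
  rewrite map_inj_in_uniq // => y y' Hy Hy' E.
  have [_ C1] := sgP y; have [_ C2] := sgP y'.
  rewrite E in C1.
  have C : congL1 p q (padd y k) (padd y' k) by apply: cong_trans C1 (cong_sym C2).
  by apply: (rep_inj R Hy Hy'); move/cong_addE: C.
have Sub : {subset [seq sg i | i <- s] <= s}.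
  by move=> z /mapP [y _ ->]; case: (sgP y).
have Hs : (size s <= size [seq sg i | i <- s])%N by rewrite size_map.
have [_ E] := uniq_min_size Um Sub Hs.
exact: uniq_perm.
Qed.

Lemma sum_const_seq (s : seq pt) (c : int) : \sum_(y <- s) c = (size s)%:Z * c.
Proof.
elim: s => [|a s IH]; first by rewrite big_nil mul0r.
by rewrite big_cons IH /= intS mulrDl mul1r.
Qed.

Lemma sum_wt (s : seq pt) (b : pt -> bool) :
  \sum_(y <- s) wt (b y) = (size s)%:Z - 3 * (count b s)%:Z.
Proof.
elim: s => [|a s IH]; first by rewrite big_nil.
rewrite big_cons IH /= /wt; case: (b a) => /=; lia.
Qed.

Lemma sum_nonneg (s : seq pt) (g : pt -> int) :
  (forall y, y \in s -> 0 <= g y) -> 0 <= \sum_(y <- s) g y.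
Proof.
elim: s => [|a s IH] H; first by rewrite big_nil.
rewrite big_cons; apply: addr_ge0; first by apply: H; exact: mem_head.
by apply: IH => y Hy; apply: H; rewrite inE Hy orbT.
Qed.

Lemma sum_ge (s : seq pt) (g : pt -> int) y0 :
  (forall y, y \in s -> 0 <= g y) -> y0 \in s -> g y0 <= \sum_(y <- s) g y.
Proof.
elim: s => [|a s IH] H //; rewrite inE big_cons => /orP [/eqP ->|Hy].
  rewrite lerDl; apply: sum_nonneg => y Hy; apply: H; by rewrite inE Hy orbT.
have H' : forall y, y \in s -> 0 <= g y by move=> y Hy'; apply: H; rewrite inE Hy' orbT.
apply: le_trans (IH H' Hy) _; rewrite lerDr; exact: H a (mem_head a s).
Qed.

Lemma count3 (s : seq pt) (T : pt -> tile) :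
  (count (fun y => isU (T y)) s + count (fun y => isV (T y)) s + count (fun y => isW (T y)) s = size s)%N.
Proof.
elim: s => [|a s IH] //=; case: (T a) => /=; lia.
Qed.
Lemma wu_per p q T x y : is_tiling p q T -> congL1 p q x y -> wu T x = wu T y.
Proof. by move=> HT C; rewrite /wu (tiling_per HT C). Qed.

Lemma wv_per p q T x y : is_tiling p q T -> congL1 p q x y -> wv T x = wv T y.
Proof. by move=> HT C; rewrite /wv (tiling_per HT (cong_add pv C)). Qed.

Definition Nphi (N cU cV : int) (k : pt) := k.1 * (N - 3 * cU) + k.2 * (N - 3 * cV).

Lemma slope p q T h s : is_tiling p q T -> is_height T h -> repsys p q s ->
  forall y l, inL1 p q l ->
  (size s)%:Z * (h (padd y l) - h y) =
  Nphi (size s)%:Z (count (fun z => isU (T z)) s)%:Z (count (fun z => isV (T z)) s)%:Z l.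
Proof.
move=> HT Hh R y l Hl.
pose g y := h (padd y l) - h y.
have gc : forall y, g y = g (0,0).
  apply: pt_const => z.
  - rewrite /g; have [H1 _] := Hh z; have [H2 _] := Hh (padd z l).
    have -> : padd (padd z pu) l = padd (padd z l) pu by ptx.
    rewrite (wu_per HT (cong_shift z Hl)) in H2; lia.
  - rewrite /g; have [_ H1] := Hh z; have [_ H2] := Hh (padd z l).
    have -> : padd (padd z pv) l = padd (padd z l) pv by ptx.
    rewrite (wv_per HT (cong_shift z Hl)) in H2; lia.
pose A := \sum_(z <- s) wu T z.
pose B := \sum_(z <- s) wv T z.
pose F k := \sum_(z <- s) (h (padd z k) - h z).
have FE : forall k, F k = k.1 * A + k.2 * B.
  apply: pt_ind.
  - rewrite /F /= big1 ?mul0r ?addr0 // => z _.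
    have -> : padd z (0,0) = z by ptx.
    by rewrite subrr.
  - move=> k.
    have -> : F (padd k pu) = F k + A.
      rewrite /F /A -(shift_sum (f:=wu T) k R); last by move=> ? ?; apply: wu_per.
      rewrite -big_split /=.
      apply: eq_bigr => z _; have [H1 _] := Hh (padd z k).
      have -> : padd z (padd k pu) = padd (padd z k) pu by ptx.
      lia.
    have -> : (padd k pu).1 = k.1 + 1 by [].
    have -> : (padd k pu).2 = k.2 by rewrite /padd /= addr0.
    rewrite mulrDl mul1r; lia.
  - move=> k.
    have -> : F (padd k pv) = F k + B.
      rewrite /F /B -(shift_sum (f:=wv T) k R); last by move=> ? ?; apply: wv_per.
      rewrite -big_split /=.
      apply: eq_bigr => z _; have [_ H1] := Hh (padd z k).
      have -> : padd z (padd k pv) = padd (padd z k) pv by ptx.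
      lia.
    have -> : (padd k pv).2 = k.2 + 1 by [].
    have -> : (padd k pv).1 = k.1 by rewrite /padd /= addr0.
    rewrite mulrDl mul1r; lia.
have AE : A = (size s)%:Z - 3 * (count (fun z => isU (T z)) s)%:Z.
  by rewrite /A /wu sum_wt.
have BE : B = (size s)%:Z - 3 * (count (fun z => isV (T z)) s)%:Z.
  rewrite /B /wv (shift_sum (f:=fun z => wt (isV (T z))) pv R); first by rewrite sum_wt.
  by move=> a b C; rewrite (tiling_per HT C).
have : F l = (size s)%:Z * g y.
  rewrite /F (eq_bigr (fun _ => g (0,0))); last by move=> z _; rewrite -(gc z).
  by rewrite sum_const_seq -(gc y).
rewrite FE AE BE /Nphi /g => <-; done.
Qed.
Definition c3 (P : Prop) : int := if excluded_middle_informative P then 3 else 0.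
Lemma c3T (P : Prop) : P -> c3 P = 3.
Proof. by rewrite /c3; case: excluded_middle_informative. Qed.
Lemma c3F (P : Prop) : ~ P -> c3 P = 0.
Proof. by rewrite /c3; case: excluded_middle_informative. Qed.
Lemma emiT (P : Prop) A (a b : A) : P -> (if excluded_middle_informative P then a else b) = a.
Proof. by case: excluded_middle_informative. Qed.
Lemma emiF (P : Prop) A (a b : A) : ~ P -> (if excluded_middle_informative P then a else b) = b.
Proof. by case: excluded_middle_informative. Qed.
Lemma emi_iff (P Q : Prop) A (a b : A) : (P <-> Q) ->
  (if excluded_middle_informative P then a else b) = (if excluded_middle_informative Q then a else b).
Proof. move=> E; case: (excluded_middle_informative P) => HP; case: (excluded_middle_informative Q) => HQ //; exfalso; tauto. Qed.

Definition flipT p q (T : pt -> tile) x (y : pt) : tile :=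
  if excluded_middle_informative (congL1 p q y x) then V
  else if excluded_middle_informative (congL1 p q y (psub x pu)) then U
  else if excluded_middle_informative (congL1 p q y (padd x pv)) then W
  else T y.

Lemma cong_shift_iff p q y l z : inL1 p q l -> (congL1 p q (padd y l) z <-> congL1 p q y z).
Proof.
move=> Hl; have C := cong_shift y Hl; split => H.
  exact: cong_trans (cong_sym C) H.
exact: cong_trans C H.
Qed.

Lemma flip_ok p q T h x : is_tiling p q T -> is_height T h ->
  T x = U -> T (psub x pu) = W -> T (padd x pv) = V ->
  flip_step p q T (flipT p q T x) /\ is_tiling p q (flipT p q T x) /\
  is_height (flipT p q T x) (fun y => h y - c3 (congL1 p q y x)).
Proof.
move=> HT Hh TU TW TV.
have Cx y : congL1 p q y x -> T y = U by move=> C; rewrite (tiling_per HT C).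
have Cm y : congL1 p q y (psub x pu) -> T y = W by move=> C; rewrite (tiling_per HT C).
have Cp y : congL1 p q y (padd x pv) -> T y = V by move=> C; rewrite (tiling_per HT C).
have Eu y : congL1 p q (padd y pu) x <-> congL1 p q y (psub x pu).
  have := @cong_addE p q y (psub x pu) pu; have -> : padd (psub x pu) pu = x by ptx. done.
have Ev y : congL1 p q (padd y pv) (padd x pv) <-> congL1 p q y x.
  by rewrite cong_addE.
have Hgt : is_height (flipT p q T x) (fun y => h y - c3 (congL1 p q y x)).
  move=> y; split.
  - have [H1 _] := Hh y; rewrite /wu /flipT in H1 *.
    case: (excluded_middle_informative (congL1 p q y x)) => c1.
      rewrite (Cx _ c1) /= in H1; rewrite (c3T c1) c3F; last first.
        by move/Eu/Cm; rewrite (Cx _ c1).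
      rewrite /=; lia.
    rewrite (c3F c1).
    case: (excluded_middle_informative (congL1 p q y (psub x pu))) => c2.
      rewrite (Cm _ c2) /= in H1; rewrite c3T; last by apply/Eu.
      rewrite /=; lia.
    rewrite c3F; last by move/Eu.
    case: (excluded_middle_informative (congL1 p q y (padd x pv))) => c4.
      rewrite (Cp _ c4) /= in H1; rewrite /=; lia.
    rewrite /=; lia.
  - have [_ H1] := Hh y; rewrite /wv /flipT in H1 *.
    case: (excluded_middle_informative (congL1 p q (padd y pv) x)) => c1.
      rewrite (Cx _ c1) /= in H1; rewrite (c3T c1) c3F; last first.
        by move/Ev/Cp; rewrite (Cx _ c1).
      rewrite /=; lia.
    rewrite (c3F c1).
    case: (excluded_middle_informative (congL1 p q (padd y pv) (psub x pu))) => c2.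
      rewrite (Cm _ c2) /= in H1; rewrite c3F; last first.
        by move/Ev/Cp; rewrite (Cm _ c2).
      rewrite /=; lia.
    case: (excluded_middle_informative (congL1 p q (padd y pv) (padd x pv))) => c4.
      rewrite (Cp _ c4) /= in H1; rewrite c3T; last by apply/Ev.
      rewrite /=; lia.
    rewrite c3F; last by move/Ev.
    rewrite /=; lia.
split; last split => //.
- exists x; split.
    by move=> y n1 n2 n3; rewrite /flipT !emiF.
  right; split; first by [].
  move=> y; split; [|split] => C.
  + by rewrite /flipT emiT.
  + have n1 : ~ congL1 p q y x by move/Cx; rewrite (Cm _ C).
    by rewrite /flipT emiF // emiT.
  + have n1 : ~ congL1 p q y x by move/Cx; rewrite (Cp _ C).
    have n2 : ~ congL1 p q y (psub x pu) by move/Cm; rewrite (Cp _ C).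
    by rewrite /flipT emiF // emiF // emiT.
- split; last exact: height_cond Hgt.
  move=> y l Hl; rewrite /flipT.
  rewrite (emi_iff _ _ (cong_shift_iff _ _ Hl)).
  rewrite (emi_iff _ _ (cong_shift_iff _ _ Hl)).
  rewrite (emi_iff _ _ (cong_shift_iff _ _ Hl)).
  by case: HT => HT _; rewrite HT.
Qed.
Lemma argmax (s : seq pt) (f : pt -> int) : s != [::] ->
  exists2 x, x \in s & forall y, y \in s -> f y <= f x.
Proof.
elim: s => [|a s IH] // _.
case: (altP (s =P [::])) => [->|Hs].
  by exists a => [|y]; rewrite ?inE // => /eqP ->.
case: (IH Hs) => b Hb Hmax.
case: (lerP (f a) (f b)) => H.
  exists b; first by rewrite inE Hb orbT.
  by move=> y; rewrite inE => /orP [/eqP ->|/Hmax].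
exists a; first exact: mem_head.
move=> y; rewrite inE => /orP [/eqP ->|/Hmax] //; move=> Hy; apply: le_trans Hy (ltW H).
Qed.

Lemma wt_cases b : wt b = 1 \/ wt b = -2.
Proof. by case: b; [right|left]. Qed.

Lemma ww_height T h z : is_height T h -> ww T (padd z pu) = h (psub z pv) - h (padd z pu).
Proof.
move=> Hh; have U1 := up_tri T z; have [H1 _] := Hh z; have [_ H2] := Hh (psub z pv).
have E : padd (psub z pv) pv = z by ptx.
rewrite E in H2; lia.
Qed.

Lemma per_of_inL1 (f : pt -> int) p q : (forall y l, inL1 p q l -> f (padd y l) = f y) ->
  forall z r, congL1 p q z r -> f z = f r.
Proof.
move=> H z r C; have := H r _ C; have -> : padd r (psub z r) = z by ptx. done.
Qed.

Lemma padd_psub (x k : pt) : padd (psub x k) k = x.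
Proof. ptx. Qed.

Lemma step p q T2 h2 s (N cU cV cW : int) T1 h1 m0 :
  is_tiling p q T2 -> is_height T2 h2 -> repsys p q s ->
  (forall y l, inL1 p q l -> N * (h2 (padd y l) - h2 y) = Nphi N cU cV l) ->
  N = cU + cV + cW -> 0 < cU -> 0 < cV -> 0 < cW ->
  is_tiling p q T1 -> is_height T1 h1 ->
  (forall y l, inL1 p q l -> h1 (padd y l) - h2 (padd y l) = h1 y - h2 y) ->
  (forall y, exists k, h1 y - h2 y = m0 + 3 * k /\ 0 <= k) ->
  (exists2 y, y \in s & m0 < h1 y - h2 y) ->
  exists T1' h1', flip_step p q T1 T1' /\ is_tiling p q T1' /\ is_height T1' h1' /\
  (forall y l, inL1 p q l -> h1' (padd y l) - h2 (padd y l) = h1' y - h2 y) /\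
  (forall y, exists k, h1' y - h2 y = m0 + 3 * k /\ 0 <= k) /\
  \sum_(y <- s) (h1' y - h2 y - m0) + 3 <= \sum_(y <- s) (h1 y - h2 y - m0).
Proof.
move=> HT2 Hh2 R Hsl HN cU0 cV0 cW0 HT1 Hh1 Dper Dk [y1 Hy1 Dy1].
pose D y := h1 y - h2 y.
have Dc : forall z r, congL1 p q z r -> D z = D r by apply: per_of_inL1.
have sne : s != [::] by apply/eqP => E; rewrite E in Hy1.
have [xM HxM Mmax] := argmax D sne.
pose M := D xM.
have Dle : forall z, D z <= M.
  move=> z; case: R => Hc _; case: (Hc z) => r Hr C; rewrite (Dc _ _ C); exact: Mmax.
have m0M : m0 < M by apply: lt_le_trans Dy1 (Mmax _ Hy1).
pose Psi y := N * h2 y - Nphi N cU cV y.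
have Psiper : forall y l, inL1 p q l -> Psi (padd y l) = Psi y.
  move=> y l Hl; rewrite /Psi; have := Hsl y l Hl.
  have -> : Nphi N cU cV (padd y l) = Nphi N cU cV y + Nphi N cU cV l.
    rewrite /Nphi /padd /=; ring.
  move=> H; rewrite -H; ring.
have Psic : forall z r, congL1 p q z r -> Psi z = Psi r by apply: per_of_inL1.
pose s' := [seq y <- s | D y == M].
have s'ne : s' != [::].
  have Hm : xM \in s' by rewrite mem_filter eqxx HxM.
  by apply/eqP => E; rewrite E in Hm.
have [x Hx Xmax] := argmax Psi s'ne.
move: Hx; rewrite mem_filter => /andP [/eqP DxM Hxs].
have PsiS : forall z, D z = M -> Psi z <= Psi x.
  move=> z Dz; case: R => Hc _; case: (Hc z) => r Hr C.
  rewrite (Psic _ _ C); apply: Xmax; rewrite mem_filter Hr -(Dc _ _ C) Dz eqxx //.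
have loc : forall y', (h1 y' - h1 x = 1 \/ h1 y' - h1 x = -2) ->
    (h2 y' - h2 x = 1 \/ h2 y' - h2 x = -2) ->
    (h2 y' - h2 x = 1 -> Psi x < Psi y') -> h1 y' - h1 x = -2.
  move=> y' A1 A2 A3; have := Dle y'; have := PsiS y'; rewrite /D in DxM *.
  case: A2 => A2.
    have := A3 A2; case: A1 => A1 //. lia.
  case: A1 => A1 //; lia.
have NU : Nphi N cU cV (padd x pu) = Nphi N cU cV x + (N - 3 * cU) by rewrite /Nphi /=; ring.
have NV : Nphi N cU cV (padd x pv) = Nphi N cU cV x + (N - 3 * cV) by rewrite /Nphi /=; ring.
have NW : Nphi N cU cV (psub (psub x pu) pv) = Nphi N cU cV x - (N - 3 * cU) - (N - 3 * cV)
  by rewrite /Nphi /=; ring.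
have Su : h1 (padd x pu) - h1 x = -2.
  have [H1 _] := Hh1 x; have [H2 _] := Hh2 x.
  apply: loc; rewrite ?H1 ?H2; try exact: wt_cases.
  move=> E; rewrite /Psi NU.
  have E' : h2 (padd x pu) = h2 x + 1 by lia.
  rewrite E' mulrDr mulr1; lia.
have Sv : h1 (padd x pv) - h1 x = -2.
  have [_ H1] := Hh1 x; have [_ H2] := Hh2 x.
  apply: loc; rewrite ?H1 ?H2; try exact: wt_cases.
  move=> E; rewrite /Psi NV.
  have E' : h2 (padd x pv) = h2 x + 1 by lia.
  rewrite E' mulrDr mulr1; lia.
have Ex : padd (psub x pu) pu = x by apply: padd_psub.
have Sw : h1 (psub (psub x pu) pv) - h1 x = -2.
  have H1 := ww_height (psub x pu) Hh1; have H2 := ww_height (psub x pu) Hh2.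
  rewrite Ex in H1 H2.
  apply: loc; rewrite -?H1 -?H2; try exact: wt_cases.
  move=> E; rewrite /Psi NW.
  have E' : h2 (psub (psub x pu) pv) = h2 x + 1 by lia.
  rewrite E' mulrDr mulr1; lia.
have TU : T1 x = U.
  have [H1 _] := Hh1 x; rewrite Su /wu in H1; move: H1; rewrite /wt; by case: (T1 x).
have TV : T1 (padd x pv) = V.
  have [_ H1] := Hh1 x; rewrite Sv /wv in H1; move: H1; rewrite /wt; by case: (T1 _).
have TW : T1 (psub x pu) = W.
  have H1 := ww_height (psub x pu) Hh1; rewrite Ex Sw /ww in H1.
  move: H1; rewrite /wt; by case: (T1 _).
have [Hf [Ht Hh]] := flip_ok HT1 Hh1 TU TW TV.
exists (flipT p q T1 x), (fun y => h1 y - c3 (congL1 p q y x)).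
split => //; split => //; split => //; split; [|split].
- move=> y l Hl; have := Dper y l Hl.
  rewrite /c3 (emi_iff _ _ (cong_shift_iff _ _ Hl)); lia.
- move=> y; case: (Dk y) => k [Hk1 Hk2].
  case: (excluded_middle_informative (congL1 p q y x)) => C.
    rewrite (c3T C); have : D y = M by rewrite (Dc _ _ C).
    rewrite /D in DxM *; move=> E; exists (k - 1); split; lia.
  rewrite (c3F C); exists k; split => //; lia.
- have E : \sum_(y <- s) (h1 y - h2 y - m0) =
           \sum_(y <- s) (h1 y - c3 (congL1 p q y x) - h2 y - m0) + \sum_(y <- s) c3 (congL1 p q y x).
    rewrite -big_split /=; apply: eq_bigr => y _; lia.
  rewrite E lerD2l.
  have : c3 (congL1 p q x x) <= \sum_(y <- s) c3 (congL1 p q y x).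
    apply: sum_ge => // y _; rewrite /c3; by case: excluded_middle_informative.
  by rewrite c3T //; apply: cong_refl.
Qed.
Lemma final p q T1 T2 h1 h2 s m0 : repsys p q s -> is_height T1 h1 -> is_height T2 h2 ->
  (forall y l, inL1 p q l -> h1 (padd y l) - h2 (padd y l) = h1 y - h2 y) ->
  (forall y, y \in s -> h1 y - h2 y = m0) -> T1 = T2.
Proof.
move=> R Hh1 Hh2 Dper Ds.
have Dc : forall z r, congL1 p q z r -> h1 z - h2 z = h1 r - h2 r.
  exact: (per_of_inL1 (f := fun y => h1 y - h2 y)).
have D0 : forall z, h1 z - h2 z = m0.
  move=> z; case: R => Hc _; case: (Hc z) => r Hr C; rewrite (Dc _ _ C); exact: Ds.
apply: functional_extensionality => y.
have Eu : wu T1 y = wu T2 y.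
  have [A1 _] := Hh1 y; have [A2 _] := Hh2 y; have := D0 y; have := D0 (padd y pu); lia.
have Ev : wv T1 (psub y pv) = wv T2 (psub y pv).
  have [_ A1] := Hh1 (psub y pv); have [_ A2] := Hh2 (psub y pv).
  have := D0 (psub y pv); have := D0 (padd (psub y pv) pv); lia.
move: Eu Ev; rewrite /wu /wv padd_psub /wt.
by case: (T1 y); case: (T2 y).
Qed.

Lemma main_ind p q T2 h2 s (N cU cV cW : int) :
  is_tiling p q T2 -> is_height T2 h2 -> repsys p q s ->
  (forall y l, inL1 p q l -> N * (h2 (padd y l) - h2 y) = Nphi N cU cV l) ->
  N = cU + cV + cW -> 0 < cU -> 0 < cV -> 0 < cW ->
  forall (n : nat) T1 h1 m0, is_tiling p q T1 -> is_height T1 h1 ->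
  (forall y l, inL1 p q l -> h1 (padd y l) - h2 (padd y l) = h1 y - h2 y) ->
  (forall y, exists k, h1 y - h2 y = m0 + 3 * k /\ 0 <= k) ->
  \sum_(y <- s) (h1 y - h2 y - m0) <= n%:Z ->
  flip_connected p q T1 T2.
Proof.
move=> HT2 Hh2 R Hsl HN cU0 cV0 cW0.
elim=> [|n IH] T1 h1 m0 HT1 Hh1 Dper Dk Hsum;
  (case: (boolP (has (fun y => m0 < h1 y - h2 y) s)) => Hhas; last first);
  try (have -> : T1 = T2; [ apply: (final R Hh1 Hh2 Dper (m0 := m0)) => y Hy;
       have := Dk y; case=> k [E1 E2];
       have : ~~ (m0 < h1 y - h2 y) by [apply: contra Hhas => H; apply/hasP; exists y];
       lia | exact: fc_refl ]).
all: have [y1 Hy1 Dy1] : exists2 y, y \in s & m0 < h1 y - h2 y by apply/hasP.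
all: have [T1' [h1' [Hf [Ht [Hh [Dper' [Dk' Hs']]]]]]] :=
       step HT2 Hh2 R Hsl HN cU0 cV0 cW0 HT1 Hh1 Dper Dk (ex_intro2 _ _ y1 Hy1 Dy1).
- have : 0 <= \sum_(y <- s) (h1' y - h2 y - m0).
    apply: sum_nonneg => y _; case: (Dk' y) => k [E1 E2]; lia.
  lia.
- apply: fc_step Hf _; apply: (IH T1' h1' m0) => //; lia.
Qed.
Unset Implicit Arguments.
Theorem theorem6p41 (p q : pt) (T1 T2 : pt -> tile) (g1 g2 g3 : nat) :
  full_rank p q ->
  is_tiling p q T1 -> is_tiling p q T2 ->
  has_type p q T1 g1 g2 g3 -> has_type p q T2 g1 g2 g3 ->
  (0 < g1)%N -> (0 < g2)%N -> (0 < g3)%N ->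
  flip_connected p q T1 T2.
Proof.
move=> _ HT1 HT2 [s1 [Hc1 [Hn1 [C11 [C12 C13]]]]] [s2 [Hc2 [Hn2 [C21 [C22 C23]]]]] g10 g20 g30.
have R1 : repsys p q s1 by split.
have R2 : repsys p q s2 by split.
have [h1 Hh1] := height_exists HT1.
have [h2 Hh2] := height_exists HT2.
have S1 := slope HT1 Hh1 R1; rewrite C11 C12 in S1.
have S2 := slope HT2 Hh2 R2; rewrite C21 C22 in S2.
have Z1 : size s1 = (g1 + g2 + g3)%N by rewrite -(count3 s1 T1) C11 C12 C13.
have Z2 : size s2 = (g1 + g2 + g3)%N by rewrite -(count3 s2 T2) C21 C22 C23.
rewrite Z1 in S1; rewrite Z2 in S2.
set N := ((g1 + g2 + g3)%N)%:Z in S1 S2.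
have NZ : N != 0 by rewrite /N; apply/eqP; lia.
have Dper : forall y l, inL1 p q l -> h1 (padd y l) - h2 (padd y l) = h1 y - h2 y.
  move=> y l Hl; have E1 := S1 y l Hl; have E2 := S2 y l Hl.
  have : N * (h1 (padd y l) - h1 y) = N * (h2 (padd y l) - h2 y) by rewrite E1 E2.
  move/(mulfI NZ); lia.
pose D y := h1 y - h2 y.
have Dc : forall z r, congL1 p q z r -> D z = D r by apply: per_of_inL1.
have sne : s2 != [::].
  case: (Hc2 (0,0)) => r Hr _; by apply/eqP => E; rewrite E in Hr.
have [xm Hxm Xmin] := argmax (fun y => - D y) sne.
pose m0 := D xm.
have Dge : forall z, m0 <= D z.
  move=> z; case: (Hc2 z) => r Hr C; rewrite (Dc _ _ C); have := Xmin r Hr; rewrite /m0; lia.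
have D3 : forall y, exists k, D y = D (0,0) + 3 * k.
  apply: pt_ind; first by exists 0; lia.
  - move=> y; have [A1 _] := Hh1 y; have [A2 _] := Hh2 y.
    have [d Hd] : exists d, D (padd y pu) = D y + 3 * d.
      rewrite /D; case: (wt_cases (isU (T1 y))) => W1; case: (wt_cases (isU (T2 y))) => W2;
      rewrite /wu in A1 A2; [exists 0|exists 1|exists (-1)|exists 0]; lia.
    split; case=> k Hk; [exists (k + d) | exists (k - d)]; lia.
  - move=> y; have [_ A1] := Hh1 y; have [_ A2] := Hh2 y.
    have [d Hd] : exists d, D (padd y pv) = D y + 3 * d.
      rewrite /D; case: (wt_cases (isV (T1 (padd y pv)))) => W1;
      case: (wt_cases (isV (T2 (padd y pv)))) => W2;
      rewrite /wv in A1 A2; [exists 0|exists 1|exists (-1)|exists 0]; lia.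
    split; case=> k Hk; [exists (k + d) | exists (k - d)]; lia.
have Dk : forall y, exists k, h1 y - h2 y = m0 + 3 * k /\ 0 <= k.
  move=> y; case: (D3 y) => k1 E1; case: (D3 xm) => k2 E2.
  have := Dge y; rewrite /m0 /D in E1 E2 *.
  move=> H; exists (k1 - k2); split; lia.
pose n := absz (\sum_(y <- s2) (h1 y - h2 y - m0)).
have MM := (@main_ind p q T2 h2 s2 N g1%:Z g2%:Z g3%:Z HT2 Hh2 R2 S2).
apply: (MM _ _ _ _ n T1 h1 m0 HT1 Hh1 Dper Dk).
- rewrite /N; lia.
- lia.
- lia.
- lia.
- rewrite /n abszE; exact: ler_norm.
Qed.
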